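(* Let $p>2$ and $K/\mathbb{Q}_p$ finite unramified. For each $p$-bounded and non-Steinberg Hodge type $\underline{r}$, there exist a non-scalar tame inertial type $\tau$ and a profile $J\subset\mathbb{Z}/f'\mathbb{Z}$ such that $\underline{r}\sim r(\tau,J)$.
   Context: $K/\mathbb{Q}_p$ is unramified of degree $f$ with residue field $k$, embeddings $\kappa_i:k\hookrightarrow\overline{\mathbb{F}}_p$ indexed by $i\in\mathbb{Z}/f\mathbb{Z}$ with $\kappa_{i+1}^p=\kappa_i$, and $\omega_i$ the fundamental character of level $f$ attached to $\kappa_i$. A Hodge type is a tuple of integers $\underline{r}=(r_{i,1}\ge r_{i,2})_{i\in\mathbb{Z}/f\mathbb{Z}}$; it is $p$-bounded if $r_{i,1}-r_{i,2}\le p$ for all $i$, Steinberg if $r_{i,1}-r_{i,2}=p$ for all $i$. Write $\underline{r}\sim\underline{r}'$ if $r'_{i,j}=r_{i,j}+\lambda_i$ for some $(\lambda_i)\in\mathbb{Z}^f$ with $\sum_{i=0}^{f-1}p^{f-i}\lambda_i\equiv0\pmod{p^f-1}$ (equivalently $\prod_i\omega_i^{\lambda_i}$ trivial). $E$ is a sufficiently large coefficient field with ring of integers $\mathcal{O}$ and residue field $\mathbb{F}$. A non-scalar tame inertial type $\tau=\eta\oplus\eta':I_K\to\mathrm{GL}_2(\mathcal{O})$ is principal series if $\eta,\eta'$ extend to $G_K$ and cuspidal otherwise ($\eta'=\eta^{p^f}$); $f'=f$ resp. $2f$. Let $k'$ be the degree $f'$ extension of $k$, embeddings $\kappa'_i$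 ($i\in\mathbb{Z}/f'\mathbb{Z}$, $(\kappa'_{i+1})^p=\kappa'_i$, extending $\kappa_{i\bmod f}$), $\omega'_i$ the corresponding fundamental characters of level $f'$ of $I_K$ and $\widetilde\omega'_i$ their Teichmüller lifts. Define $\gamma_i\in[0,p-1]$ by $\eta\eta'^{-1}=\prod_{i\in\mathbb{Z}/f'\mathbb{Z}}(\widetilde\omega'_i)^{\gamma_i}$. A profile is any $J\subset\mathbb{Z}/f'\mathbb{Z}$ (principal series) or one with $i\in J\iff i+f\notin J$ (cuspidal). With $\delta_S$ the indicator of $S$: $s_{J,i}=p-1-\gamma_i-\delta_{J^c}(i)$ if $i-1\in J$, $s_{J,i}=\gamma_i-\delta_J(i)$ if $i-1\notin J$ ($f$-periodic, in $[-1,p-1]$); $t_{J,i}=\gamma_i+\delta_{J^c}(i)$ if $i-1\in J$, $0$ otherwise. $\Theta_J:k^\times\to\mathbb{F}^\times$ is the character with $\Theta_J\circ N_{k'/k}=\eta'\prod_{i}(\kappa'_i)^{t_{J,i}}$ ($\eta'$ viewed as a character of $k'^\times$ via the Artin map of the totally tamely ramified extension trivializing $\tau$); via local class field theory (uniformizers $\leftrightarrow$ geometric Frobenius) write $\Theta_J=\prod_{i=0}^{f-1}\omega_i^{\theta_{J,i}}$. Then $r(\tau,J)$ is the Hodge type with $r_{i,1}=1-\theta_{J,i}$, $r_{i,2}=-s_{J,i}-\theta_{J,i}$, well defined up to $\sim$. *)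

(* Defs.v *)
From mathcomp Require Import all_boot all_algebra.
Unset Printing Implicit Defensive.
Import GRing.Theory Num.Theory.
Local Open Scope ring_scope.

Definition hodge_type (f : nat) (r : 'I_f -> int * int) : Prop :=
  forall i, (r i).2 <= (r i).1.

Definition p_bounded (p f : nat) (r : 'I_f -> int * int) : Prop :=
  forall i, (r i).1 - (r i).2 <= p%:Z.

Definition steinberg (p f : nat) (r : 'I_f -> int * int) : Prop :=
  forall i, (r i).1 - (r i).2 = p%:Z.

Definition hodge_equiv (p f : nat) (r r' : 'I_f -> int * int) : Prop :=
  exists lam : 'I_f -> int,
    (forall i, (r' i).1 = (r i).1 + lam i /\ (r' i).2 = (r i).2 + lam i) /\
    (((p ^ f)%:Z - 1) %| \sum_(i < f) (p ^ (f - i))%:Z * lam i)%Z.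

(* A tame character of I_K of level n is \tilde\omega'_0^a for an exponent a
   (mod p^n - 1), where \omega'_0 is the fundamental character of level n
   attached to kappa'_0.  Note prod_i (\omega'_i)^{c_i} = (\omega'_0)^{sum_i c_i p^{n-i}}.
   - PrincipalSeries a b : eta = \tilde\omega_0^a, eta' = \tilde\omega_0^b (level f).
   - Cuspidal a : eta = \tilde\omega'_0^a (level 2f), eta' = eta^{p^f}. *)
Inductive tame_type :=
| PrincipalSeries of int & int
| Cuspidal of int.

Definition fprime (f : nat) (tau : tame_type) : nat :=
  match tau with PrincipalSeries _ _ => f | Cuspidal _ => (2 * f)%N end.

Definition eta_exp (tau : tame_type) : int :=
  match tau with PrincipalSeries a _ => a | Cuspidal a => a end.

Definition eta'_exp (p f : nat) (tau : tame_type) : int :=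
  match tau with PrincipalSeries _ b => b | Cuspidal a => a * (p ^ f)%:Z end.

Definition modulus (p n : nat) : int := (p ^ n)%:Z - 1.

(* non-scalar: eta <> eta'.  In the cuspidal case this says eta <> eta^{p^f},
   i.e. eta does not extend to G_K, so tau is genuinely cuspidal. *)
Definition non_scalar (p f : nat) (tau : tame_type) : bool :=
  ~~ ((modulus p (fprime f tau)) %| (eta_exp tau - eta'_exp p f tau))%Z.

(* exponent of eta eta'^{-1} w.r.t. \tilde\omega'_0, reduced to [0, p^{f'}-2] *)
Definition diff_exp (p f : nat) (tau : tame_type) : nat :=
  absz ((eta_exp tau - eta'_exp p f tau) %% modulus p (fprime f tau))%Z.

(* gamma_i in [0,p-1] with eta eta'^{-1} = prod_i (\tilde\omega'_i)^{gamma_i},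
   i.e. sum_i gamma_i p^{f'-i} = diff_exp mod p^{f'}-1: gamma_i is the base-p
   digit of diff_exp at position (f'-i) mod f'. *)
Definition gamma (p f : nat) (tau : tame_type) (i : nat) : nat :=
  let n := fprime f tau in
  ((diff_exp p f tau %/ p ^ ((n - i) %% n)) %% p)%N.

Definition inJ (n : nat) (J : {set 'I_n}) (i : nat) : bool :=
  [exists j in J, nat_of_ord j == (i %% n)%N].

Definition prevn (n i : nat) : nat := ((i + n).-1 %% n)%N.

Definition is_profile (f : nat) (tau : tame_type) (J : {set 'I_(fprime f tau)}) : Prop :=
  match tau with
  | PrincipalSeries _ _ => True
  | Cuspidal _ => forall i : nat, (i < 2 * f)%N ->
                    (inJ (fprime f tau) J i = ~~ inJ (fprime f tau) J (i + f)%N)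
  end.

Definition s_J (p f : nat) (tau : tame_type) (J : {set 'I_(fprime f tau)}) (i : nat) : int :=
  let n := fprime f tau in
  if inJ n J (prevn n i)
  then p%:Z - 1 - (gamma p f tau i)%:Z - (nat_of_bool (~~ inJ n J i))%:Z
  else (gamma p f tau i)%:Z - (nat_of_bool (inJ n J i))%:Z.

Definition t_J (p f : nat) (tau : tame_type) (J : {set 'I_(fprime f tau)}) (i : nat) : int :=
  let n := fprime f tau in
  if inJ n J (prevn n i)
  then (gamma p f tau i)%:Z + (nat_of_bool (~~ inJ n J i))%:Z
  else 0.

(* exponent e such that N_{k'/k} (x) = x^e on k'^x *)
Definition norm_exp (p f : nat) (tau : tame_type) : int :=
  match tau with PrincipalSeries _ _ => 1 | Cuspidal _ => (p ^ f)%:Z + 1 end.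

(* theta describes Theta_J = prod_{i<f} omega_i^{theta_i}:
   Theta_J o N_{k'/k} = eta' prod_i (kappa'_i)^{t_{J,i}}, written in exponents of
   kappa'_0 (kappa_i = kappa_0^{p^{f-i}}, kappa'_i = kappa'_0^{p^{f'-i}},
   kappa_0 o N = kappa'_0^{norm_exp}), modulo p^{f'} - 1. *)
Definition Theta_cond (p f : nat) (tau : tame_type) (J : {set 'I_(fprime f tau)})
    (theta : 'I_f -> int) : Prop :=
  let n := fprime f tau in
  (modulus p n %|
     (\sum_(i < f) theta i * (p ^ (f - i))%:Z) * norm_exp p f tau
     - (eta'_exp p f tau + \sum_(i < n) t_J p f tau J i * (p ^ (n - i))%:Z))%Z.

Definition r_tauJ (p f : nat) (tau : tame_type) (J : {set 'I_(fprime f tau)})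
    (theta : 'I_f -> int) : 'I_f -> int * int :=
  fun i => (1 - theta i, - s_J p f tau J i - theta i).

(* Main.v *)
Require Import Defs.
From mathcomp Require Import all_boot all_algebra.
From mathcomp Require Import zify ring lra.
Import GRing.Theory Num.Theory.
Local Open Scope ring_scope.

Definition gfun (p : nat) (A B : bool) (d : nat) : nat :=
  (if A then (if B then p - d else p.-1 - d) else (if B then d else d.-1))%N.

Definition validb (p : nat) (A B : bool) (d : nat) : bool :=
  ((d <= p) && (if A == B then 0 < d else d < p))%N.

Lemma gfun_lt p A B d : validb p A B d -> (gfun p A B d < p)%N.
Proof. by case: A; case: B; rewrite /validb /gfun /=; lia. Qed.

Lemma gfun_s p A B d : validb p A B d ->
  (if A then p%:Z - 1 - (gfun p A B d)%:Z - (nat_of_bool (~~B))%:Z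
   else (gfun p A B d)%:Z - (nat_of_bool B)%:Z) = d%:Z - 1.
Proof. by case: A; case: B; rewrite /validb /gfun /=; lia. Qed.

Lemma gfun_t p A B d : validb p A B d ->
  (if A then (gfun p A B d)%:Z + (nat_of_bool (~~B))%:Z else 0) =
  (if A then (p - d)%:Z else 0).
Proof. by case: A; case: B; rewrite /validb /gfun /=; lia. Qed.

Lemma validbN p A B d : validb p (~~A) (~~B) d = validb p A B d.
Proof. by case: A; case: B. Qed.

Lemma gfunN p A B d : validb p A B d ->
  (gfun p (~~A) (~~B) d + gfun p A B d = p.-1)%N.
Proof. by case: A; case: B; rewrite /validb /gfun /=; lia. Qed.

Lemma gfun_pair {p A B d} : validb p A B d ->
  (if A then (p - d)%:Z else 0) - (if ~~A then (p - d)%:Z else 0)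
   - (gfun p A B d)%:Z = (1 - (nat_of_bool B)%:Z) - p%:Z * (1 - (nat_of_bool A)%:Z).
Proof. by case: A; case: B; rewrite /validb /gfun /=; lia. Qed.

Lemma digitP (p n : nat) (G : nat -> nat) k : (0 < p)%N ->
  (forall q, q < n -> G q < p)%N -> (k < n)%N ->
  ((\sum_(q < n) G q * p ^ q) %/ p ^ k %% p = G k)%N.
Proof.
elim: n G k => [//|n IH] G k hp hG hk.
rewrite big_ord_recl /= expn0 muln1.
have -> : (\sum_(i < n) G (lift ord0 i) * p ^ (lift ord0 i) =
          (\sum_(i < n) G i.+1 * p ^ i) * p)%N.
  rewrite big_distrl /=; apply: eq_bigr => i _.
  by rewrite /= expnS mulnCA mulnC.
case: k hk => [|k] hk.
  by rewrite expn0 divn1 addnC modnMDl modn_small // hG.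
rewrite expnS divnMA addnC divnMDl // (divn_small (hG 0%N isT)) addn0.
by apply: (IH (fun q => G q.+1)) => // q hq; apply: hG.
Qed.

Definition gam p n (JB : nat -> bool) (dd : nat -> nat) (i : nat) : nat :=
  gfun p (JB (i + n).-1) (JB i) (dd i).
Definition Gq p n JB dd q := gam p n JB dd ((n - q) %% n).
Definition Dsum p n JB dd := (\sum_(q < n) Gq p n JB dd q * p ^ q)%N.

Lemma rev_rev n i : (i < n)%N -> ((n - (n - i) %% n) %% n = i)%N.
Proof.
move=> hi; case: i hi => [|i] hi; first by rewrite subn0 modnn subn0 modnn.
rewrite (@modn_small (n - i.+1)%N); last by lia.
by rewrite modn_small; lia.
Qed.

Definition allvalid p n JB dd := forall i, (i < n)%N -> validb p (JB (i + n).-1) (JB i) (dd i).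

Lemma Dsum_digit p n JB dd i : (0 < p)%N -> allvalid p n JB dd -> (i < n)%N ->
  ((Dsum p n JB dd %/ p ^ ((n - i) %% n)) %% p = gam p n JB dd i)%N.
Proof.
move=> hp hv hi; have hn : (0 < n)%N by lia.
rewrite /Dsum digitP //.
- by rewrite /Gq rev_rev.
- by move=> q hq; rewrite /Gq /gam; apply: gfun_lt; apply: hv; apply: ltn_pmod.
- exact: ltn_pmod.
Qed.

Lemma inJ_set n (P : nat -> bool) i : (0 < n)%N ->
  inJ n [set j : 'I_n | P j] i = P (i %% n)%N.
Proof.
move=> hn; apply/existsP/idP.
  by case=> j; rewrite inE => /andP[hj /eqP <-].
by move=> h; exists (Ordinal (ltn_pmod i hn)); rewrite inE /= eqxx andbT.
Qed.

Lemma gamma_eq p f tau JB dd i :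
  diff_exp p f tau = Dsum p (fprime f tau) JB dd -> (0 < p)%N ->
  allvalid p (fprime f tau) JB dd -> (i < fprime f tau)%N ->
  gamma p f tau i = gam p (fprime f tau) JB dd i.
Proof. by move=> hD hp hv hi; rewrite /gamma hD Dsum_digit. Qed.

Lemma sJ_eq p f tau JB dd i :
  diff_exp p f tau = Dsum p (fprime f tau) JB dd -> (0 < p)%N ->
  allvalid p (fprime f tau) JB dd ->
  (forall x, JB (x %% fprime f tau)%N = JB x) -> (i < fprime f tau)%N ->
  s_J p f tau [set j : 'I_(fprime f tau) | JB j] i = (dd i)%:Z - 1.
Proof.
move=> hD hp hv hJ hi; have hn : (0 < fprime f tau)%N by lia.
rewrite /s_J /prevn !inJ_set // !hJ (@gamma_eq p f tau JB dd i hD) //.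
exact: gfun_s (hv i hi).
Qed.

Lemma tJ_eq p f tau JB dd i :
  diff_exp p f tau = Dsum p (fprime f tau) JB dd -> (0 < p)%N ->
  allvalid p (fprime f tau) JB dd ->
  (forall x, JB (x %% fprime f tau)%N = JB x) -> (i < fprime f tau)%N ->
  t_J p f tau [set j : 'I_(fprime f tau) | JB j] i =
  if JB (i + fprime f tau).-1 then (p - dd i)%:Z else 0.
Proof.
move=> hD hp hv hJ hi; have hn : (0 < fprime f tau)%N by lia.
rewrite /t_J /prevn !inJ_set // !hJ (@gamma_eq p f tau JB dd i hD) //.
exact: gfun_t (hv i hi).
Qed.

Definition cnt (dd : nat -> nat) (i : nat) : nat := (\sum_(j < i.+1) (dd j == 0%N))%N.
Definition Pk dd k i := odd (cnt dd i + (k <= i))%N.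

Lemma Pk0 dd k : Pk dd k 0 = (dd 0%N == 0%N) (+) (k == 0%N).
Proof. by rewrite /Pk /cnt big_ord1 leqn0 oddD !oddb. Qed.

Lemma PkS dd k j : Pk dd k j.+1 = Pk dd k j (+) ((dd j.+1 == 0%N) (+) (k == j.+1)).
Proof.
rewrite /Pk /cnt big_ord_recr /=.
have -> : (k <= j.+1)%N = ((k <= j)%N (+) (k == j.+1)).
  by case: (ltngtP k j.+1) => h; lia.
rewrite !oddD !oddb.
have e : forall a b c d : bool, (a (+) b) (+) (c (+) d) = (a (+) c) (+) (b (+) d).
  by do 4!case.
by rewrite e.
Qed.

Lemma valid_of p A d (kj : bool) : (0 < p)%N -> (d <= p)%N -> (kj -> 0 < d < p)%N ->
  validb p A (A (+) ((d == 0%N) (+) kj)) d.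
Proof.
move=> hp hdp hk; rewrite /validb hdp /=.
case: kj hk => [/(_ isT) h|_]; case: A; case: eqP => hd /=; lia.
Qed.

Lemma Pvalid p dd k j : (0 < p)%N -> (dd j <= p)%N -> (k == j -> 0 < dd j < p)%N ->
  validb p (if j is j'.+1 then Pk dd k j' else false) (Pk dd k j) (dd j).
Proof.
move=> hp hdp hk; case: j hdp hk => [|j] hdp hk.
  by rewrite Pk0; apply: valid_of.
by rewrite PkS; apply: valid_of.
Qed.

Definition JBp f dd k (i : nat) := Pk dd k (i %% f)%N.
Definition JBc f dd k (i : nat) :=
  let j := (i %% (2 * f))%N in if (j < f)%N then Pk dd k j else ~~ Pk dd k (j - f)%N.

Lemma JBp_mod f dd k x : JBp f dd k (x %% f)%N = JBp f dd k x.
Proof. by rewrite /JBp modn_mod. Qed.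

Lemma JBc_mod f dd k x : JBc f dd k (x %% (2 * f))%N = JBc f dd k x.
Proof. by rewrite /JBc modn_mod. Qed.

Lemma JBc_shift f dd k x : (0 < f)%N -> JBc f dd k (x + f)%N = ~~ JBc f dd k x.
Proof.
move=> hf; rewrite /JBc.
have h2 : (0 < 2 * f)%N by lia.
have hx := ltn_pmod x h2.
rewrite -modnDml.
case: (ltnP (x %% (2 * f)) f) => hj.
  rewrite (@modn_small (x %% (2 * f) + f)%N); last by lia.
  by rewrite ltnNge leq_addl /= addnK.
have -> : (x %% (2 * f) + f = (x %% (2 * f) - f) + 2 * f)%N by lia.
rewrite modnDr modn_small; last by lia.
by rewrite (_ : (x %% (2 * f) - f < f)%N) ?negbK //; lia.
Qed.

Lemma allvalid_p p f dd k : (0 < p)%N -> (0 < f)%N ->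
  (forall i, dd (i %% f)%N = dd i) -> (forall i, dd i <= p)%N ->
  (forall j, (j < f)%N -> k == j -> 0 < dd j < p)%N ->
  Pk dd k f.-1 = false -> allvalid p f (JBp f dd k) dd.
Proof.
move=> hp hf hdm hdp hk hP i hi; rewrite /JBp (modn_small hi).
case: i hi => [|i] hi.
  rewrite add0n modn_small; last by lia.
  by rewrite hP; apply: (@Pvalid p dd k 0%N) => //; apply: hk.
rewrite addSn /= -modnDmr modnn addn0 modn_small; last by lia.
by apply: (@Pvalid p dd k i.+1) => //; apply: hk.
Qed.

Lemma allvalid_c p f dd k : (0 < p)%N -> (0 < f)%N ->
  (forall i, dd (i %% f)%N = dd i) -> (forall i, dd i <= p)%N ->
  (forall j, (j < f)%N -> k == j -> 0 < dd j < p)%N ->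
  Pk dd k f.-1 = true -> allvalid p (2 * f) (JBc f dd k) dd.
Proof.
move=> hp hf hdm hdp hk hP.
have low : forall j, (j < f)%N -> validb p (JBc f dd k (j + 2 * f).-1) (JBc f dd k j) (dd j).
  move=> j hj.
  have -> : JBc f dd k j = Pk dd k j by rewrite /JBc modn_small ?hj //; lia.
  case: j hj => [|j] hj.
    rewrite add0n /JBc modn_small; last by lia.
    rewrite ltnNge (_ : (f <= (2 * f).-1)%N) /=; last by lia.
    rewrite (_ : ((2 * f).-1 - f = f.-1)%N); last by lia.
    by rewrite hP; apply: (@Pvalid p dd k 0%N) => //; apply: hk.
  rewrite addSn /= -JBc_mod modnDr /JBc !modn_small; try lia.
  rewrite (_ : (j < f)%N); last by lia.
  by apply: (@Pvalid p dd k j.+1) => //; apply: hk.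
move=> i hi; case: (ltnP i f) => hif; first exact: low.
have -> : i = ((i - f) + f)%N by lia.
have hj : (i - f < f)%N by lia.
rewrite JBc_shift // (_ : ((i - f + f + 2 * f).-1 = (i - f + 2 * f).-1 + f)%N); last by lia.
rewrite JBc_shift // validbN -hdm modnDr hdm.
exact: low.
Qed.

Lemma geomN p m : (0 < p)%N -> (\sum_(q < m) p.-1 * p ^ q + 1 = p ^ m)%N.
Proof.
move=> hp; elim: m => [|m IH]; first by rewrite big_ord0.
rewrite big_ord_recr /= -addnA (addnC _ 1) addnA IH expnS.
by rewrite -mulSn prednK.
Qed.

Lemma rev_sum p n (F : nat -> int) : F n = F 0%N ->
  \sum_(i < n) F i * (p ^ (n - i))%:Z =
  \sum_(q < n) F (n - q)%N * (p ^ q)%:Z + F 0%N * ((p ^ n)%:Z - 1).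
Proof.
move=> hF.
have := @big_nat_rev _ (@GRing.add int) 0 0%N n.+1 xpredT (fun i => F i * (p ^ (n - i))%:Z).
rewrite big_nat_recr //= big_nat_recr //= subnn expn0 mulr1 !big_mkord.
rewrite add0n subnn subn0 hF.
under [in X in _ = X -> _]eq_bigr => i _ do rewrite subSS subKn ?(ltnW (ltn_ord i)) //.
move=> h; apply: (addIr (F 0%N)); rewrite h mulrBr mulr1; ring.
Qed.

Lemma split2 (R : Type) (idx : R) (op : Monoid.law idx) f (F : nat -> R) :
  \big[op/idx]_(q < 2 * f) F q =
  op (\big[op/idx]_(q < f) F q) (\big[op/idx]_(q < f) F (q + f)%N).
Proof.
rewrite -(big_mkord (fun _ => true)) -!(big_mkord (fun _ => true)).
rewrite (@big_cat_nat _ _ _ f) //=; last by lia.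
congr (op _ _); rewrite -{1}(add0n f) big_addn.
have -> : (2 * f - f = f)%N by lia.
by rewrite big_mkord.
Qed.

Lemma split2n f (F : nat -> nat) :
  (\sum_(q < 2 * f) F q = \sum_(q < f) F q + \sum_(q < f) F (q + f)%N)%N.
Proof. exact: (@split2 nat 0%N addn). Qed.

Lemma split2z f (F : nat -> int) :
  \sum_(q < 2 * f) F q = \sum_(q < f) F q + \sum_(q < f) F (q + f)%N.
Proof. exact: (@split2 int 0 +%R). Qed.

Lemma Posz_sum n (F : nat -> nat) :
  ((\sum_(q < n) F q)%N)%:Z = \sum_(q < n) (F q)%:Z.
Proof.
elim: n => [|n IH]; first by rewrite !big_ord0.
by rewrite !big_ord_recr /= PoszD IH.
Qed.

Lemma key_pair (X Y Gz B B' w pz : int) : X - Y - Gz = (1 - B) - pz * (1 - B') ->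
  X * w = Gz * w + Y * w + ((1 - B) * w - (1 - B') * (pz * w)).
Proof. move=> h; have -> : X = Gz + Y + ((1 - B) - pz * (1 - B')) by rewrite -h; ring.
ring. Qed.

Lemma telesc (C : nat -> int) m :
  \sum_(q < m) (C q - C q.+1) = C 0%N - C m.
Proof.
elim: m => [|m IH]; first by rewrite big_ord0 subrr.
by rewrite big_ord_recr /= IH; ring.
Qed.

Lemma pf_ge p f : (0 < f)%N -> (0 < p)%N -> (p <= p ^ f)%N.
Proof. by move=> hf hp; rewrite -{1}(expn1 p) leq_pexp2l //. Qed.

Lemma ineq1 (P L : int) : 3 <= P -> 0 <= L -> L + P * (P - 1 - L) < P * P - 1.
Proof.
move=> hP hL; rewrite -subr_gt0.
have -> : P * P - 1 - (L + P * (P - 1 - L)) = (P - 1) * (L + 1) by ring.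
apply: mulr_gt0; lia.
Qed.
Lemma ineq2 (P L H : int) : 3 <= P -> 0 <= L -> 0 <= H -> L + H + 1 = P -> 0 < L + P * H.
Proof.
move=> hP hL hH e.
have : 0 <= (P - 1) * H by apply: mulr_ge0; lia.
have -> : (P - 1) * H = P * H - H by ring.
lia.
Qed.

Lemma cusp_case p f (r : 'I_f -> int * int) (dd : nat -> nat) k :
  (2 < p)%N -> (0 < f)%N ->
  (forall i : 'I_f, (dd i)%:Z = (r i).1 - (r i).2) ->
  (forall i, dd (i %% f)%N = dd i) -> (forall i, dd i <= p)%N ->
  (forall j, (j < f)%N -> k == j -> 0 < dd j < p)%N ->
  Pk dd k f.-1 = true ->
  exists (tau : tame_type) (J : {set 'I_(fprime f tau)}) (theta : 'I_f -> int),
    [/\ non_scalar p f tau, is_profile f tau J, Theta_cond p f tau J theta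
      & hodge_equiv p f r (r_tauJ p f tau J theta)].
Proof.
move=> hp2 hf hdr hdm hdp hk hP.
have hp : (0 < p)%N by lia.
pose n := (2 * f)%N.
have hn : (0 < n)%N by rewrite /n; lia.
pose JB := JBc f dd k.
have hv : allvalid p n JB dd by apply: allvalid_c.
have hJm : forall x, JB (x %% n)%N = JB x by move=> x; apply: JBc_mod.
have hsh : forall x, JB (x + f)%N = ~~ JB x by move=> x; apply: JBc_shift.
have hJn : forall x, JB (x + n)%N = JB x by move=> x; rewrite -hJm modnDr hJm.
have hdm2 : forall x, dd (x %% n)%N = dd x.
  move=> x; rewrite -(hdm x) -(hdm (x %% n)%N).
  by rewrite (modn_dvdm _ (dvdn_mull 2 (dvdnn f))).
have hdf : forall x, dd (x + f)%N = dd x by move=> x; rewrite -hdm modnDr hdm.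
have ePrev : forall y, JB (y + n).-1 = JB (y %% n + n).-1.
  move=> y; have e : forall z, ((z + n).-1 = z + n.-1)%N by move=> z; lia.
  by rewrite !e -[in LHS]hJm -modnDml hJm.
have hvall : forall x, validb p (JB (x + n).-1) (JB x) (dd x).
  by move=> x; have := hv _ (ltn_pmod x hn); rewrite hJm hdm2 -ePrev.
pose gx := gam p n JB dd.
have gmod : forall x, gx (x %% n)%N = gx x by move=> x; rewrite /gx /gam hJm hdm2 -ePrev.
pose G := Gq p n JB dd.
have hG : forall q, G q = gx (n - q)%N by move=> q; rewrite /G /Gq -/gx gmod.
pose Bq q := JB (n - q)%N.
have eB : forall q, (q < n)%N -> JB (n - q + n).-1 = Bq q.+1.
  move=> q hq; rewrite /Bq (_ : ((n - q + n).-1 = (n - q.+1) + n)%N) ?hJn //; lia.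
have hGq : forall q, (q < f)%N -> G q = gfun p (Bq q.+1) (Bq q) (dd (n - q)%N).
  move=> q hq; rewrite hG /gx /gam eB //; rewrite /n; lia.
have hGqf : forall q, (q < f)%N -> G (q + f)%N = gfun p (~~ Bq q.+1) (~~ Bq q) (dd (n - q)%N).
  move=> q hq; rewrite hG /gx /gam.
  have e1 : (n - (q + f) = f - q)%N by rewrite /n; lia.
  have e2 : ((f - q + n).-1 = (n - q.+1) + f)%N by rewrite /n; lia.
  have e3 : (n - q = (f - q) + f)%N by rewrite /n; lia.
  by rewrite e1 e2 hsh /Bq e3 hsh negbK hdf.
have hvq : forall q, (q < f)%N -> validb p (Bq q.+1) (Bq q) (dd (n - q)%N).
  by move=> q hq; rewrite -eB; [exact: hvall | rewrite /n; lia].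
have F1 : forall q, (q < f)%N -> (G (q + f)%N + G q = p.-1)%N.
  by move=> q hq; rewrite hGqf // hGq // gfunN // hvq.
pose L := (\sum_(q < f) G q * p ^ q)%N.
pose Hs := (\sum_(q < f) G (q + f)%N * p ^ q)%N.
have hLH : (L + Hs + 1 = p ^ f)%N.
  rewrite /L /Hs -big_split /= -(@geomN p f hp).
  by congr (_ + 1)%N; apply: eq_bigr => q _; rewrite -mulnDl addnC F1.
have hD : Dsum p n JB dd = (L + p ^ f * Hs)%N.
  rewrite /Dsum /n (split2n f (fun q => Gq p (2 * f) JB dd q * p ^ q)%N) -/n; congr (_ + _)%N; rewrite /Hs big_distrr; apply: eq_bigr => q _ /=.
  by rewrite expnD /G; ring.
have hLp : (L < p ^ f)%N by lia.
have hPge : (p <= p ^ f)%N by apply: pf_ge.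
pose tt := fun i => if JB (i + n).-1 then (p - dd i)%:Z else 0 : int.
have ttn : tt n = tt 0%N.
  rewrite /tt ePrev modnn; congr (if _ then _ else _).
  by rewrite -hdm2 modnn.
have htt2 : forall q, (q < f)%N -> tt (n - q)%N = if Bq q.+1 then (p - dd (n - q)%N)%:Z else 0.
  by move=> q hq; rewrite /tt eB //; rewrite /n; lia.
have htt1 : forall q, (q < f)%N -> tt (f - q)%N = if ~~ Bq q.+1 then (p - dd (n - q)%N)%:Z else 0.
  move=> q hq; rewrite /tt.
  have e2 : ((f - q + n).-1 = (n - q.+1) + f)%N by rewrite /n; lia.
  have e3 : (n - q = (f - q) + f)%N by rewrite /n; lia.
  by rewrite e2 hsh /Bq e3 hdf.
pose S := \sum_(q < f) tt (f - q)%N * (p ^ q)%:Z.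
pose T' := \sum_(q < n) tt (n - q)%N * (p ^ q)%:Z.
pose P := (p ^ f)%:Z.
pose b0 := (nat_of_bool (JB 0%N))%:Z.
pose C := fun q => (1 - (nat_of_bool (Bq q))%:Z) * (p ^ q)%:Z.
have hsumE : \sum_(q < f) tt (n - q)%N * (p ^ q)%:Z = L%:Z + S + \sum_(q < f) (C q - C q.+1).
  rewrite /L (Posz_sum f (fun q => G q * p ^ q)%N) /S -!big_split /=; apply: eq_bigr => q _.
  have hq := ltn_ord q.
  rewrite /C htt2 // htt1 // expnS PoszM PoszM.
  apply: key_pair; have := gfun_pair (hvq q hq); rewrite -hGq //.
have hT' : T' = L%:Z + 1 - b0 - b0 * P + S + P * S.
  rewrite /T' /n (split2z f (fun q => tt (2 * f - q)%N * (p ^ q)%:Z)) -/n hsumE telesc.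
  have -> : \sum_(q < f) tt (n - (q + f))%N * (p ^ (q + f))%:Z = P * S.
    rewrite /S big_distrr; apply: eq_bigr => q _ /=.
    rewrite (_ : (n - (q + f) = f - q)%N); last by rewrite /n; lia.
    by rewrite expnD PoszM /P; ring.
  have hB0 : Bq 0%N = JB 0%N by rewrite /Bq subn0 -[n]add0n hJn.
  have hBf : Bq f = ~~ JB 0%N by rewrite /Bq (_ : (n - f = 0 + f)%N) ?hsh //; rewrite /n; lia.
  rewrite /C hB0 hBf expn0 /b0 -/P; case: (JB 0%N) => /=; ring.
pose R := \sum_(i < f) (1 - (r i).1) * (p ^ (f - i))%:Z.
pose tt0 := tt 0%N.
pose K := L%:Z + S - b0 + tt0 * (P - 1) - (P - 1).
pose m := R - K.
pose a := (L%:Z - P) + m * (P + 1).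
have hM : (p ^ (2 * f))%:Z = P * P by rewrite /P mul2n -addnn expnD PoszM.
have hDz : (Dsum p n JB dd)%:Z = L%:Z + P * Hs%:Z by rewrite hD PoszD PoszM.
have hLHz : L%:Z + Hs%:Z + 1 = P by rewrite /P -hLH !PoszD.
have hP3 : 3 <= P by rewrite /P; lia.
have hL0 : 0 <= L%:Z by [].
have hH0 : 0 <= Hs%:Z by [].
have e : a - a * P = (- m) * (P * P - 1) + (Dsum p n JB dd)%:Z.
  rewrite hDz /a (_ : Hs%:Z = P - 1 - L%:Z); last by rewrite -hLHz; ring.
  ring.
have hDlt : (Dsum p n JB dd)%:Z < P * P - 1.
  rewrite hDz (_ : Hs%:Z = P - 1 - L%:Z); last by rewrite -hLHz; ring.
  exact: ineq1.
have hDgt : 0 < (Dsum p n JB dd)%:Z.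
  by rewrite hDz; apply: ineq2.
have hdiff : diff_exp p f (Cuspidal a) = Dsum p n JB dd.
  rewrite /diff_exp /= /modulus /= hM e modzMDl modz_small //.
exists (Cuspidal a), [set j : 'I_(fprime f (Cuspidal a)) | JB j], (fun i => 1 - (r i).1).
split.
- rewrite /non_scalar /modulus /= hM e; apply/negP => /dvdz_mod0P.
  rewrite modzMDl modz_small; first by lia.
  by apply/andP; split => //; lia.
- rewrite /is_profile => i hi.
  by rewrite !inJ_set // !hJm hsh negbK.
- rewrite /Theta_cond /= /modulus /= hM.
  have -> : \sum_(i < 2 * f) t_J p f (Cuspidal a) [set j : 'I_(fprime f (Cuspidal a)) | JB j] i
             * (p ^ (2 * f - i))%:Z = \sum_(i < n) tt i * (p ^ (n - i))%:Z.
    apply: eq_bigr => i _.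
    by rewrite (@tJ_eq p f (Cuspidal a) JB dd i hdiff hp hv hJm (ltn_ord i)).
  rewrite (@rev_sum p n tt ttn) -/T' hT' -/tt0 (_ : (p ^ n)%:Z = P * P) //.
  apply/dvdzP; exists (- m); rewrite /a /m /K /R -/P; ring.
- exists (fun _ => 0); split.
    move=> i; rewrite /r_tauJ /=.
    rewrite (@sJ_eq p f (Cuspidal a) JB dd i hdiff hp hv hJm); last by have := ltn_ord i; rewrite /=; lia.
    by rewrite hdr; split; ring.
  by rewrite big1 ?dvdz0 // => i _; rewrite mulr0.
Qed.

Lemma sum_pos_witness n (F : nat -> nat) q : (q < n)%N -> (0 < F q)%N ->
  (0 < \sum_(i < n) F i)%N.
Proof.
move=> hq hF; rewrite (bigD1 (Ordinal hq)) //=; lia.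
Qed.

Lemma prin_case p f (r : 'I_f -> int * int) (dd : nat -> nat) k :
  (2 < p)%N -> (0 < f)%N ->
  (forall i : 'I_f, (dd i)%:Z = (r i).1 - (r i).2) ->
  (forall i, dd (i %% f)%N = dd i) -> (forall i, dd i <= p)%N ->
  (forall j, (j < f)%N -> k == j -> 0 < dd j < p)%N ->
  Pk dd k f.-1 = false ->
  (exists i, (i < f)%N /\ gam p f (JBp f dd k) dd i != 0%N) ->
  (exists i, (i < f)%N /\ gam p f (JBp f dd k) dd i != p.-1) ->
  exists (tau : tame_type) (J : {set 'I_(fprime f tau)}) (theta : 'I_f -> int),
    [/\ non_scalar p f tau, is_profile f tau J, Theta_cond p f tau J theta
      & hodge_equiv p f r (r_tauJ p f tau J theta)].
Proof.
move=> hp2 hf hdr hdm hdp hk hP [i0 [hi0 hg0]] [i1 [hi1 hg1]].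
have hp : (0 < p)%N by lia.
pose JB := JBp f dd k.
have hv : allvalid p f JB dd by apply: allvalid_p.
have hJm : forall x, JB (x %% f)%N = JB x by move=> x; apply: JBp_mod.
pose D := Dsum p f JB dd.
pose G := Gq p f JB dd.
have hGlt : forall q, (q < f)%N -> (G q < p)%N.
  by move=> q hq; rewrite /G /Gq /gam; apply: gfun_lt; apply: hv; apply: ltn_pmod.
pose D' := (\sum_(q < f) (p.-1 - G q) * p ^ q)%N.
have hDD : (D + D' + 1 = p ^ f)%N.
  rewrite /D /Dsum /D' -big_split /= -(@geomN p f hp); congr (_ + 1)%N.
  apply: eq_bigr => q _; rewrite -mulnDl subnKC //.
  by rewrite -/G; have := hGlt q (ltn_ord q); lia.
have hq : forall i, (i < f)%N -> ((f - i) %% f < f)%N by move=> i _; apply: ltn_pmod.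
have hGi : forall i, (i < f)%N -> G ((f - i) %% f)%N = gam p f JB dd i.
  by move=> i hi; rewrite /G /Gq rev_rev.
have hD0 : (0 < D)%N.
  apply: (@sum_pos_witness f (fun q => G q * p ^ q)%N ((f - i0) %% f)%N (hq _ hi0)).
  by rewrite hGi // muln_gt0 expn_gt0 hp /= andbT lt0n.
have hD'0 : (0 < D')%N.
  apply: (@sum_pos_witness f (fun q => (p.-1 - G q) * p ^ q)%N ((f - i1) %% f)%N (hq _ hi1)).
  rewrite hGi // muln_gt0 expn_gt0 hp /=.
  have := hGlt _ (hq _ hi1); rewrite hGi // andbT; move: hg1; rewrite -/JB; lia.
pose tt := fun i => if JB (i + f).-1 then (p - dd i)%:Z else 0 : int.
pose R := \sum_(i < f) (1 - (r i).1) * (p ^ (f - i))%:Z.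
pose T := \sum_(i < f) tt i * (p ^ (f - i))%:Z.
pose b := R - T.
have hdiff : diff_exp p f (PrincipalSeries (D%:Z + b) b) = D.
  rewrite /diff_exp /= /modulus /= (_ : D%:Z + b - b = D%:Z); last by ring.
  by rewrite modz_small //; apply/andP; split => //; lia.
exists (PrincipalSeries (D%:Z + b) b), [set j : 'I_(fprime f (PrincipalSeries (D%:Z + b) b)) | JB j],
  (fun i => 1 - (r i).1).
split.
- rewrite /non_scalar /modulus /= (_ : D%:Z + b - b = D%:Z); last by ring.
  apply/negP => /dvdz_mod0P; rewrite modz_small; first by lia.
  by apply/andP; split => //; lia.
- by [].
- rewrite /Theta_cond /= /modulus /=.
  have -> : \sum_(i < f) t_J p f (PrincipalSeries (D%:Z + b) b)
      [set j : 'I_(fprime f (PrincipalSeries (D%:Z + b) b)) | JB j] i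
             * (p ^ (f - i))%:Z = T.
    apply: eq_bigr => i _.
    by rewrite (@tJ_eq p f (PrincipalSeries (D%:Z + b) b) JB dd i hdiff hp hv hJm (ltn_ord i)).
  apply/dvdzP; exists 0; rewrite /b /R; ring.
- exists (fun _ => 0); split.
    move=> i; rewrite /r_tauJ /=.
    rewrite (@sJ_eq p f (PrincipalSeries (D%:Z + b) b) JB dd i hdiff hp hv hJm (ltn_ord i)).
    by rewrite hdr; split; ring.
  by rewrite big1 ?dvdz0 // => i _; rewrite mulr0.
Qed.

Theorem proposition4p11 (p f : nat) (r : 'I_f -> int * int) :
  prime p -> (2 < p)%N -> (0 < f)%N ->
  hodge_type f r -> p_bounded p f r -> ~ steinberg p f r ->
  exists (tau : tame_type) (J : {set 'I_(fprime f tau)}) (theta : 'I_f -> int),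
    [/\ non_scalar p f tau, is_profile f tau J, Theta_cond p f tau J theta
      & hodge_equiv p f r (r_tauJ p f tau J theta)].
Proof.
move=> _ hp2 hf hht hpb hst.
pose o i : 'I_f := Ordinal (ltn_pmod i hf).
have ho : forall i : 'I_f, o i = i by move=> i; apply: val_inj; rewrite /= modn_small.
pose dd i := absz ((r (o i)).1 - (r (o i)).2).
have hdr : forall i : 'I_f, (dd i)%:Z = (r i).1 - (r i).2.
  by move=> i; rewrite /dd ho; have := hht i; lia.
have hdm : forall i, dd (i %% f)%N = dd i.
  move=> i; rewrite /dd (_ : o (i %% f)%N = o i) //.
  by apply: val_inj; rewrite /= modn_mod.
have hdp : forall i, (dd i <= p)%N.
  by move=> i; rewrite /dd; have := hht (o i); have := hpb (o i); lia.
pose z := cnt dd f.-1.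
have hff : (f <= f.-1)%N = false by lia.
case hz : (odd z).
  apply: (@cusp_case p f r dd f) => //.
    by move=> j hj /eqP hfj; lia.
  by rewrite /Pk hff addn0.
case: (boolP [exists j : 'I_f, (0 < dd j < p)%N]) => [/existsP [j hj]|hnof].
  apply: (@cusp_case p f r dd j) => //.
    by move=> j' hj' /eqP <-.
  by rewrite /Pk (_ : (j <= f.-1)%N) ?addn1 /= -/z ?hz //; have := ltn_ord j; lia.
have hnf : forall j, (j < f)%N -> dd j = 0%N \/ dd j = p.
  move=> j hj; have := hdp j; move/existsPn: hnof => /(_ (Ordinal hj)) /=; lia.
have hPf : Pk dd f f.-1 = false by rewrite /Pk hff addn0.
have hv : allvalid p f (JBp f dd f) dd.
  by apply: allvalid_p => //; [lia | move=> j hj /eqP hfj; lia].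
have [i0 hi0] : exists i, (i < f)%N && (dd i == 0%N).
  case: (boolP [exists i : 'I_f, dd i != p]) => [/existsP [i hi]|hall].
    exists i; rewrite ltn_ord /=; have := hnf i (ltn_ord i); move: hi; lia.
  exfalso; apply: hst => i; rewrite -hdr; move/existsPn: hall => /(_ i).
  by rewrite negbK => /eqP ->.
apply: (@prin_case p f r dd f) => //.
- move=> j hj /eqP hfj; lia.
- exists f.-1; split; first by lia.
  have hf1 : (f.-1 < f)%N by lia.
  move: (hv _ hf1); rewrite /gam /JBp (modn_small hf1) hPf.
  have := hnf _ hf1; have := hdp f.-1.
  by case: (Pk dd f (((f.-1 + f).-1) %% f)%N); rewrite /validb /gfun /=; lia.
- have hex : exists n, (n < f)%N && (dd n == 0%N) by exists i0.
  case: (ex_minnP hex) => m /andP[hm hm0] hmin.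
  exists m; split => //.
  have hc : cnt dd m = 1%N.
    rewrite /cnt big_ord_recr /= hm0 big1 // => l _.
    case: eqP => // hl0; exfalso.
    have := hmin l; rewrite hl0 eqxx andbT (ltn_trans (ltn_ord l) hm) => /(_ isT).
    by have := ltn_ord l; lia.
  have hJm : JBp f dd f m = true.
    by rewrite /JBp (modn_small hm) /Pk hc (_ : (f <= m)%N = false) //; lia.
  move: (hv _ hm); rewrite /gam hJm (eqP hm0).
  by case: (JBp f dd f (m + f).-1); rewrite /validb /gfun /=; lia.
Qed.
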